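(* Let $U,V\in\mathbb{R}^{3\times3}$ be symmetric positive definite with $U\neq V$, $UV=VU$, and $V=RUR^T$ for some $R\in SO(3)$. Suppose the eigenvalues of $U$ satisfy $\frac1{\sqrt2}<\lambda_1<\lambda_2=1<\lambda_3$, that $U$ and $V$ have a common eigenvector for the eigenvalue $1$, and that $$\lambda_3=\frac{\lambda_1}{\sqrt{2\lambda_1^2-1}}.$$ Then there exist rotations $R_u^{+},R_v^{+},R_u^{-},R_v^{-}\in SO(3)$, nonzero vectors $b^{+},b^{-}\in\mathbb{R}^3$ with $b^{+}\nparallel b^{-}$, and unit vectors $\hat m_u^{\pm},\hat m_v^{\pm}$ such that, for each sign, $$R_u^{\pm}U-I=b^{\pm}\otimes\hat m_u^{\pm},\qquad R_v^{\pm}V-I=b^{\pm}\otimes\hat m_v^{\pm},$$ and hence $R_u^{\pm}U-R_v^{\pm}V=b^{\pm}\otimes(\hat m_u^{\pm}-\hat m_v^{\pm})$. That is, $U$, $V$ and the identity (austenite) form two distinct planar triple clusters in which the three pairwise differences are rank-one with a common (parallel) shear vector.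
   Context: Here $I$ is the identity matrix (representing austenite) and $SO(3)$ the rotation group. *)

(* Defs.v *)
From HB Require Import structures.
From mathcomp Require Import all_boot all_order all_algebra.
From mathcomp Require Import reals.
Set Implicit Arguments. Unset Strict Implicit. Unset Printing Implicit Defensive.
Import Order.TTheory GRing.Theory Num.Theory.
Local Open Scope ring_scope.

Definition is_rot (R : realType) (Q : 'M[R]_3) : Prop :=
  Q^T *m Q = 1%:M /\ \det Q = 1.

Definition spd (R : realType) (A : 'M[R]_3) : Prop :=
  A^T = A /\ forall x : 'cV[R]_3, x != 0 -> 0 < (x^T *m A *m x) 0 0.

Definition unit_vec (R : realType) (m : 'rV[R]_3) : Prop :=
  (m *m m^T) 0 0 = 1.

Definition parallel (R : realType) (a b : 'cV[R]_3) : Prop :=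
  exists c : R, a = c *: b \/ b = c *: a.

Definition tens (R : realType) (b : 'cV[R]_3) (m : 'rV[R]_3) : 'M[R]_3 := b *m m.

(* Main.v *)
Require Import Defs.
From HB Require Import structures.
From mathcomp Require Import all_boot all_order all_algebra.
From mathcomp Require Import reals.
From mathcomp Require Import ring lra.
Set Implicit Arguments. Unset Strict Implicit. Unset Printing Implicit Defensive.
Import Order.TTheory GRing.Theory Num.Theory.
Local Open Scope ring_scope.
Section H.
Variable R : realType.
Definition i0 : 'I_3 := @Ordinal 3 0 isT.
Definition i1 : 'I_3 := @Ordinal 3 1 isT.
Definition i2 : 'I_3 := @Ordinal 3 2 isT.

Lemma ord3P (P : 'I_3 -> Prop) : P i0 -> P i1 -> P i2 -> forall i, P i.
Proof.
move=> h0 h1 h2 [[|[|[|i]]] Hi] //.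
- by rewrite (_ : Ordinal Hi = i0) //; apply: val_inj.
- by rewrite (_ : Ordinal Hi = i1) //; apply: val_inj.
- by rewrite (_ : Ordinal Hi = i2) //; apply: val_inj.
Qed.

Lemma sum3 (F : 'I_3 -> R) : \sum_i F i = F i0 + F i1 + F i2.
Proof.
rewrite !big_ord_recl big_ord0 addr0 addrA; congr (_ + _ + _); apply: congr1; exact: val_inj.
Qed.

Lemma mul3E m n (A : 'M[R]_(m,3)) (B : 'M[R]_(3,n)) i j :
  (A *m B) i j = A i i0 * B i0 j + A i i1 * B i1 j + A i i2 * B i2 j.
Proof. by rewrite mxE sum3. Qed.

Lemma det3 (A : 'M[R]_3) : \det A =
  A i0 i0 * (A i1 i1 * A i2 i2 - A i1 i2 * A i2 i1)
  - A i0 i1 * (A i1 i0 * A i2 i2 - A i1 i2 * A i2 i0)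
  + A i0 i2 * (A i1 i0 * A i2 i1 - A i1 i1 * A i2 i0).
Proof.
rewrite (expand_det_row _ i0) sum3 /cofactor.
rewrite !(expand_det_row _ ord0) !big_ord_recl !big_ord0 /cofactor !det_mx11 !mxE /=.
repeat match goal with |- context [@lift 3 ?x ?y] =>
  first [ rewrite (_ : lift x y = i0); last by apply: val_inj
        | rewrite (_ : lift x y = i1); last by apply: val_inj
        | rewrite (_ : lift x y = i2); last by apply: val_inj ] end.
rewrite /= !expr0 !expr1 ?exprS ?expr0; ring.
Qed.

Lemma mulcr (b : 'cV[R]_3) (m : 'rV[R]_3) i j : (b *m m) i j = b i 0 * m 0 j.
Proof. by rewrite mxE big_ord1. Qed.

Definition Dm (d : 'I_3 -> R) : 'M[R]_3 := \matrix_(i,j) (d j * (i == j)%:R).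

Definition Sm (k p q : R) : 'M[R]_3 := \matrix_(i,j)
  match nat_of_ord i, nat_of_ord j with
  | 0,0 => p | 0,2 => k*q | 1,1 => 1 | 2,0 => -(k*q) | 2,2 => p | _,_ => 0 end.

Definition v3 (x y z : R) : 'cV[R]_3 := \col_i
  match nat_of_ord i with 0 => x | 1 => y | _ => z end.
Definition r3 (x y z : R) : 'rV[R]_3 := \row_i
  match nat_of_ord i with 0 => x | 1 => y | _ => z end.

Definition d3 (x y z : R) (i : 'I_3) : R :=
  match nat_of_ord i with 0 => x | 1 => y | _ => z end.

Ltac ent := apply/matrixP; apply: ord3P; apply: ord3P;
  rewrite !mxE ?sum3 ?big_ord1 !mxE /=.

Section Conc.
Variables (a s w k : R).
Hypotheses (ha : 0 < a) (hs : 0 < s) (hw : 0 < w) (ss : s * s = 2 * a * a - 1)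
  (ww : w * w = 2) (hk : k = 1 \/ k = -1).
Let p := (1 + s) / (2 * a).
Let q := (1 - s) / (2 * a).
Let c := a / s.
Let g := (1 - s) / (2 * s).
Let mu := 1 / (a * w).
Let be := g * a * w.

Lemma Hpq : p * p + q * q = 1.
Proof.
have a0 : a != 0 by rewrite gt_eqF.
apply: etrans (_ : (2 + 2 * (s * s)) / (4 * (a * a)) = 1).
  by rewrite /p /q; field.
by rewrite ss; field.
Qed.

Lemma Hmu : (s * s + 1) * (mu * mu) = 1.
Proof.
have a0 : a != 0 by rewrite gt_eqF.
have w0 : w != 0 by rewrite gt_eqF.
rewrite ss /mu -ww; field; by rewrite w0 a0.
Qed.

Lemma rotS (kk : R) : kk = 1 \/ kk = -1 ->
  (Sm kk p q)^T *m Sm kk p q = 1%:M /\ \det (Sm kk p q) = 1.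
Proof.
have H := Hpq.
case=> ->; split; try (rewrite det3 !mxE /=; apply: etrans H; ring);
  by ent; rewrite ?mxE /=; try ring; apply: etrans H; ring.
Qed.

Lemma eqU : Sm k p q *m Dm (d3 a 1 c) - 1%:M = v3 be 0 (be * k) *m r3 (- s * mu) 0 (k * mu).
Proof.
have a0 : a != 0 by rewrite gt_eqF.
have w0 : w != 0 by rewrite gt_eqF.
have s0 : s != 0 by rewrite gt_eqF.
case: hk => ->; ent; rewrite /d3 /p /q /c /be /g /mu /=; field; by rewrite ?w0 ?a0 ?s0.
Qed.

Lemma eqV : Sm (-k) p q *m Dm (d3 c 1 a) - 1%:M = v3 be 0 (be * k) *m r3 mu 0 (- (k * s) * mu).
Proof.
have a0 : a != 0 by rewrite gt_eqF.
have w0 : w != 0 by rewrite gt_eqF.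
have s0 : s != 0 by rewrite gt_eqF.
case: hk => ->; ent; rewrite /d3 /p /q /c /be /g /mu /=; field; by rewrite ?w0 ?a0 ?s0.
Qed.

Lemma unitU : (r3 (- s * mu) 0 (k * mu) *m (r3 (- s * mu) 0 (k * mu))^T) 0 0 = 1.
Proof.
have H := Hmu.
by rewrite !mxE sum3 !mxE /=; case: hk => ->; apply: etrans H; ring.
Qed.

Lemma unitV : (r3 mu 0 (- (k * s) * mu) *m (r3 mu 0 (- (k * s) * mu))^T) 0 0 = 1.
Proof.
have H := Hmu.
by rewrite !mxE sum3 !mxE /=; case: hk => ->; apply: etrans H; ring.
Qed.

Lemma be_neq0 : s < 1 -> be != 0.
Proof.
move=> s1; rewrite /be /g.
have a0 : a != 0 by rewrite gt_eqF.
have w0 : w != 0 by rewrite gt_eqF.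
have s0 : s != 0 by rewrite gt_eqF.
have two : (2:R) != 0 by rewrite pnatr_eq0.
have s1' : 1 - s != 0 by rewrite subr_eq0 eq_sym lt_eqF.
by rewrite !mulf_neq0 // ?invr_neq0 ?mulf_neq0.
Qed.

End Conc.

Definition dot (x y : 'cV[R]_3) : R := (x^T *m y) 0 0.

Lemma dotE x y : dot x y = x i0 0 * y i0 0 + x i1 0 * y i1 0 + x i2 0 * y i2 0.
Proof. by rewrite /dot mul3E !mxE. Qed.

Lemma dotC x y : dot x y = dot y x.
Proof. rewrite !dotE; ring. Qed.

Lemma dotZl l x y : dot (l *: x) y = l * dot x y.
Proof. rewrite !dotE !mxE; ring. Qed.

Lemma dotZr l x y : dot x (l *: y) = l * dot x y.
Proof. rewrite !dotE !mxE; ring. Qed.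

Lemma dot_mx (A : 'M[R]_3) x y : A^T = A -> dot x (A *m y) = dot (A *m x) y.
Proof. by move=> hA; rewrite /dot mulmxA trmx_mul hA. Qed.

Lemma nz_ord (x : 'cV[R]_3) : x != 0 -> exists i, x i 0 != 0.
Proof.
move=> hx; case: (boolP [exists i, x i 0 != 0]) => [/existsP//|/existsP nE].
exfalso; move/negP: hx; apply; apply/eqP/matrixP => i j; rewrite (ord1 j) mxE.
by case: (x i 0 =P 0) => // H; case: nE; exists i; apply/eqP.
Qed.

Lemma dot_pos x : x != 0 -> 0 < dot x x.
Proof.
move=> /nz_ord [i hi]; rewrite dotE.
have h0 := sqr_ge0 (x i0 0); have h1 := sqr_ge0 (x i1 0); have h2 := sqr_ge0 (x i2 0).
have : 0 < x i 0 ^+ 2 by rewrite lt0r sqrf_eq0 hi sqr_ge0.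
move: i hi; apply: ord3P => _ /=; rewrite !expr2 in h0 h1 h2 * => h; lra.
Qed.

Lemma orth (A : 'M[R]_3) x y l m : A^T = A -> A *m x = l *: x -> A *m y = m *: y ->
  l != m -> dot x y = 0.
Proof.
move=> hA hx hy hlm; have := dot_mx x y hA; rewrite hx hy dotZl dotZr => /eqP.
rewrite -subr_eq0 -mulrBl mulf_eq0 subr_eq0 eq_sym (negbTE hlm) /= => /eqP //.
Qed.

Definition nz (x : 'cV[R]_3) := (Num.sqrt (dot x x))^-1 *: x.

Lemma nz_eig (A : 'M[R]_3) x l : A *m x = l *: x -> A *m nz x = l *: nz x.
Proof. by move=> h; rewrite /nz -scalemxAr h !scalerA mulrC. Qed.

Lemma nz_dot x y : dot x y = 0 -> dot (nz x) (nz y) = 0.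
Proof. by move=> h; rewrite /nz dotZl dotZr h !mulr0. Qed.

Lemma nz_one x : x != 0 -> dot (nz x) (nz x) = 1.
Proof.
move=> /dot_pos h; rewrite /nz dotZl dotZr.
have hs : Num.sqrt (dot x x) ^+ 2 = dot x x by rewrite sqr_sqrtr // ltW.
have s0 : Num.sqrt (dot x x) != 0 by rewrite gt_eqF // sqrtr_gt0.
rewrite -{3}hs expr2; field; done.
Qed.

Lemma ord3_cases (i : 'I_3) : i = i0 \/ i = i1 \/ i = i2.
Proof. by move: i; apply: ord3P; auto. Qed.

Definition sel3 (T : Type) (x y z : T) (i : 'I_3) : T :=
  match nat_of_ord i with 0 => x | 1 => y | _ => z end.

Lemma mulDm d n (A : 'M[R]_(3,n)) i j : (Dm d *m A) i j = d i * A i j.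
Proof.
rewrite mul3E !mxE; move: i; apply: ord3P => /=; rewrite /= ?mulr1 ?mulr0; ring.
Qed.

Lemma mulmD d (A : 'M[R]_3) i j : (A *m Dm d) i j = A i j * d j.
Proof.
rewrite mul3E !mxE; move: j; apply: ord3P => /=; rewrite /= ?mulr1 ?mulr0; ring.
Qed.


Lemma eig_col (U : 'M[R]_3) a : U^T = U -> eigenvalue U a ->
  exists x : 'cV[R]_3, x != 0 /\ U *m x = a *: x.
Proof.
move=> hU /eigenvalueP [v hv v0]; exists v^T; split.
  by apply: contraNneq v0 => h; rewrite -(trmxK v) h; apply/eqP/matrixP => i j; rewrite !mxE.
have : (v *m U)^T = (a *: v)^T by rewrite hv.
rewrite trmx_mul hU => ->; apply/matrixP => i j; rewrite !mxE //.
Qed.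

Lemma conj2 (P A B : 'M[R]_3) : P *m P^T = 1%:M ->
  (P^T *m A *m P) *m (P^T *m B *m P) = P^T *m (A *m B) *m P.
Proof. by move=> h; rewrite -!mulmxA (mulmxA P) h mul1mx !mulmxA. Qed.

Lemma unconj (P A : 'M[R]_3) : P *m P^T = 1%:M -> A = P *m (P^T *m A *m P) *m P^T.
Proof. by move=> h; rewrite !mulmxA h mul1mx -mulmxA h mulmx1. Qed.

Lemma diagonalize (U V Q : 'M[R]_3) a c :
  U^T = U -> U != V -> U *m V = V *m U -> Q^T *m Q = 1%:M -> V = Q *m U *m Q^T ->
  eigenvalue U a -> eigenvalue U c -> a != 1 -> c != 1 -> a != c ->
  (exists e : 'cV[R]_3, e != 0 /\ U *m e = e /\ V *m e = e) ->
  exists P : 'M[R]_3, [/\ P^T *m P = 1%:M, P *m P^T = 1%:M,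
     U = P *m Dm (d3 a 1 c) *m P^T & V = P *m Dm (d3 c 1 a) *m P^T].
Proof.
move=> hU hUV hc hQ hV ea ec a1 c1 ac [e [e0 [Ue Ve]]].
have [x1 [x10 Ux1]] := eig_col hU ea.
have [x3 [x30 Ux3]] := eig_col hU ec.
have Ue' : U *m e = 1 *: e by rewrite scale1r.
have Ve' : V *m e = 1 *: e by rewrite scale1r.
have o12 := orth hU Ux1 Ue' a1.
have o32 := orth hU Ux3 Ue' c1.
have o13 := orth hU Ux1 Ux3 ac.
pose u := sel3 (nz x1) (nz e) (nz x3).
pose P : 'M[R]_3 := \matrix_(i, j) u j i 0.
have PAP : forall A i j, (P^T *m A *m P) i j = dot (u i) (A *m u j).
  by move=> A i j; rewrite !mul3E dotE !mul3E !mxE; ring.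
have ON : forall i j, dot (u i) (u j) = (i == j)%:R.
  have n1 := nz_one x10; have n2 := nz_one e0; have n3 := nz_one x30.
  have p12 := nz_dot o12; have p32 := nz_dot o32; have p13 := nz_dot o13.
  apply: ord3P; apply: ord3P; rewrite /u /= ?n1 ?n2 ?n3 ?p12 ?p32 ?p13 //;
    by rewrite dotC ?p12 ?p32 ?p13.
have PtP : P^T *m P = 1%:M.
  by apply/matrixP => i j; rewrite -[P^T]mulmx1 PAP mul1mx ON !mxE.
have PPt : P *m P^T = 1%:M by apply: mulmx1C.
have Uu : forall j, U *m u j = d3 a 1 c j *: u j.
  by apply: ord3P; rewrite /u /=; [exact: nz_eig Ux1 | exact: nz_eig Ue' | exact: nz_eig Ux3].
have PUP : P^T *m U *m P = Dm (d3 a 1 c).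
  by apply/matrixP => i j; rewrite PAP Uu dotZr ON !mxE.
pose W := P^T *m V *m P.
have W11 : W i1 i1 = 1.
  by rewrite /W PAP /u /= (nz_eig Ve') scale1r nz_one.
have DW : Dm (d3 a 1 c) *m W = W *m Dm (d3 a 1 c).
  by rewrite -PUP /W !conj2 // hc.
have Woff : forall i j, i != j -> W i j = 0.
  move=> i j hij.
  have : d3 a 1 c i * W i j = W i j * d3 a 1 c j by rewrite -mulDm -mulmD DW.
  move/eqP; rewrite mulrC -subr_eq0 -mulrBr mulf_eq0 => /orP [/eqP //|].
  rewrite subr_eq0; move: hij; move: i j; apply: ord3P; apply: ord3P; rewrite /d3 /= => // _ /eqP h;
  first [ by move: a1; rewrite h eqxx | by move: a1; rewrite -h eqxx
        | by move: c1; rewrite h eqxx | by move: c1; rewrite -h eqxx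
        | by move: ac; rewrite h eqxx | by move: ac; rewrite -h eqxx ].
have WD : W = Dm (fun i => W i i).
  apply/matrixP => i j; rewrite [X in _ = X]mxE; case: (boolP (i == j)) => [/eqP ->|hij].
    by rewrite mulr1.
  by rewrite mulr0 Woff.
have VQ : V *m Q = Q *m U by rewrite hV -mulmxA hQ mulmx1.
have eigW : forall (l : R) (x : 'cV[R]_3), x != 0 -> U *m x = l *: x -> exists i, l = W i i.
  move=> l x x0 Ux.
  pose z := P^T *m Q *m x.
  have Wz : W *m z = l *: z.
    by rewrite /z /W -!mulmxA (mulmxA P) PPt mul1mx (mulmxA V) VQ -mulmxA Ux -!scalemxAr mulmxA.
  have z0 : z != 0.
    apply: contraNneq x0 => h.
    have -> : x = Q^T *m P *m z by rewrite /z !mulmxA -(mulmxA Q^T P) PPt mulmx1 hQ mul1mx.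
    by rewrite h mulmx0.
  have [i hi] := nz_ord z0.
  exists i.
  have : (W *m z) i 0 = (l *: z) i 0 by rewrite Wz.
  rewrite {1}WD mulDm [X in _ = X]mxE /= => /eqP; rewrite -subr_eq0 -mulrBl mulf_eq0 (negbTE hi) orbF.
  by rewrite subr_eq0 eq_sym => /eqP.
have [ia hia] := eigW _ _ x10 Ux1.
have [ic hic] := eigW _ _ x30 Ux3.
have hVW : V = P *m W *m P^T by rewrite (unconj V PPt).
have hUD : U = P *m Dm (d3 a 1 c) *m P^T by rewrite -PUP -unconj.
clearbody W.
exists P; split => //.
have hW : W = Dm (d3 a 1 c) \/ W = Dm (d3 c 1 a).
  case: (ord3_cases ia) => [|[|]] Ea; subst ia;
  case: (ord3_cases ic) => [|[|]] Ec; subst ic;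
  rewrite ?W11 in hia hic; try (by move: a1; rewrite hia eqxx);
  try (by move: c1; rewrite hic eqxx); try (by move: ac; rewrite hia hic eqxx).
  - left; rewrite WD; apply/matrixP => i j; rewrite !mxE; move: i j; apply: ord3P; apply: ord3P => //=; by rewrite ?W11 -?hia -?hic.
  - right; rewrite WD; apply/matrixP => i j; rewrite !mxE; move: i j; apply: ord3P; apply: ord3P => //=; by rewrite ?W11 -?hia -?hic.
case: hW => hW.
  by case/eqP: hUV; rewrite hUD hVW hW.
by rewrite hVW hW.
Qed.

End H.

Section Conj.
Variable R : realType.
Variables (P : 'M[R]_3).
Hypotheses (PtP : P^T *m P = 1%:M) (PPt : P *m P^T = 1%:M).

Lemma conj_rot (S : 'M[R]_3) : S^T *m S = 1%:M -> \det S = 1 -> is_rot (P *m S *m P^T).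
Proof.
move=> hS hd; split.
  by rewrite !trmx_mul trmxK -!mulmxA (mulmxA P^T P) PtP mul1mx (mulmxA S^T) hS mul1mx PPt.
by rewrite !det_mulmx hd mulr1 -det_mulmx PPt det1.
Qed.

Lemma conj_eq (S D : 'M[R]_3) b m : S *m D - 1%:M = b *m m ->
  (P *m S *m P^T) *m (P *m D *m P^T) - 1%:M = tens (P *m b) (m *m P^T).
Proof.
move=> h.
have E1 : P *m S *m P^T *m (P *m D *m P^T) = P *m (S *m D) *m P^T
  by rewrite -!mulmxA (mulmxA P^T P) PtP mul1mx.
have E2 : P *m b *m (m *m P^T) = P *m (S *m D - 1%:M) *m P^T by rewrite h !mulmxA.
by rewrite /tens E1 E2 mulmxBr mulmxBl mulmx1 PPt.
Qed.

Lemma conj_unit (m : 'rV[R]_3) : (m *m m^T) 0 0 = 1 -> unit_vec (m *m P^T).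
Proof. by move=> h; rewrite /unit_vec trmx_mul trmxK -mulmxA (mulmxA P^T P) PtP mul1mx. Qed.

End Conj.

Theorem mainTheorem3 (R : realType) (U V Q : 'M[R]_3) (l1 l3 : R) :
  spd U -> spd V -> U != V -> U *m V = V *m U ->
  is_rot Q -> V = Q *m U *m Q^T ->
  (forall a : R, eigenvalue U a <-> (a = l1 \/ a = 1 \/ a = l3)) ->
  (Num.sqrt 2)^-1 < l1 -> l1 < 1 -> 1 < l3 ->
  (exists e : 'cV[R]_3, e != 0 /\ U *m e = e /\ V *m e = e) ->
  l3 = l1 / Num.sqrt (2 * l1 ^+ 2 - 1) ->
  exists (Rup Rvp Rum Rvm : 'M[R]_3) (bp bm : 'cV[R]_3)
         (mup mvp mum mvm : 'rV[R]_3),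
    [/\ is_rot Rup, is_rot Rvp, is_rot Rum & is_rot Rvm] /\
    [/\ bp != 0, bm != 0 & ~ parallel bp bm] /\
    [/\ unit_vec mup, unit_vec mvp, unit_vec mum & unit_vec mvm] /\
    [/\ Rup *m U - 1%:M = tens bp mup, Rvp *m V - 1%:M = tens bp mvp,
        Rum *m U - 1%:M = tens bm mum & Rvm *m V - 1%:M = tens bm mvm] /\
    (Rup *m U - Rvp *m V = tens bp (mup - mvp) /\
     Rum *m U - Rvm *m V = tens bm (mum - mvm)).
Proof.
move=> [hU _] _ hUV hc [hQ _] hV heig hl1 l1lt1 l3gt1 he hl3.
set w : R := Num.sqrt 2 in hl1.
have w0 : 0 < w by rewrite sqrtr_gt0 ltr0n.
have ww : w * w = 2 by rewrite -expr2 sqr_sqrtr // ler0n.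
have l1w : 1 < l1 * w.
  by have h := hl1; rewrite -(ltr_pM2r w0) mulVf ?gt_eqF // in h.
have l1pos : 0 < l1.
  have : 0 < w^-1 by rewrite invr_gt0.
  lra.
have sq : (l1 * w) * (l1 * w) = 2 * (l1 * l1) by rewrite mulrACA ww mulrC.
have h2 : 0 < 2 * l1 ^+ 2 - 1 by rewrite expr2; nra.
set s := Num.sqrt (2 * l1 ^+ 2 - 1) in hl3.
have s0 : 0 < s by rewrite sqrtr_gt0.
have ss : s * s = 2 * l1 * l1 - 1 by rewrite -expr2 sqr_sqrtr ?ltW // expr2 mulrA.
have s1 : s < 1 by nra.
have ea : eigenvalue U l1 by apply/heig; left.
have ec : eigenvalue U l3 by apply/heig; right; right.
have a1 : l1 != 1 by rewrite lt_eqF.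
have c1 : l3 != 1 by rewrite gt_eqF.
have ac : l1 != l3 by rewrite lt_eqF //; apply: lt_trans l3gt1.
have [P [PtP PPt UD VD]] := diagonalize hU hUV hc hQ hV ea ec a1 c1 ac he.
rewrite hl3 in UD VD.
have k1 : (1 : R) = 1 \/ (1 : R) = -1 by left.
have km : (-1 : R) = 1 \/ (-1 : R) = -1 by right.
have kmm : (- - 1 : R) = 1 \/ (- - 1 : R) = -1 by left; rewrite opprK.
have [Rp1 Rp2] := rotS l1pos ss k1.
have [Rm1 Rm2] := rotS l1pos ss km.
have [Rmm1 Rmm2] := rotS l1pos ss kmm.
have bne := be_neq0 l1pos s0 w0 s1.
set be := _ * l1 * w in bne.
have EUp := conj_eq PtP PPt (eqU l1pos s0 w0 k1).
have EVp := conj_eq PtP PPt (eqV l1pos s0 w0 k1).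
have EUm := conj_eq PtP PPt (eqU l1pos s0 w0 km).
have EVm := conj_eq PtP PPt (eqV l1pos s0 w0 km).
rewrite -UD -VD in EUp EVp EUm EVm.
rewrite -/be in EUp EVp EUm EVm.
do 10 eexists; split; [| split; [| split; [| split]]].
4: by split; [exact: EUp | exact: EVp | exact: EUm | exact: EVm].
- by split; apply: conj_rot.
- have Pinj : forall x y : 'cV[R]_3, P *m x = P *m y -> x = y.
    by move=> x y h; rewrite -(mul1mx x) -PtP -mulmxA h mulmxA PtP mul1mx.
  have nz0 : forall k : R, P *m v3 be 0 (be * k) != 0.
    move=> k; apply/eqP => h.
    have : v3 be 0 (be * k) = 0 by apply: Pinj; rewrite h mulmx0.
    by move/matrixP/(_ i0 0); rewrite !mxE /= => /eqP; rewrite (negbTE bne).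
  split; [exact: nz0 | exact: nz0 |].
  case=> x [h|h]; rewrite scalemxAr in h; move/Pinj/matrixP: h => h;
    have := h i0 0; have := h i2 0; rewrite !mxE /= => hh2 hh0;
    (have : be = 0 by lra); by move/eqP; rewrite (negbTE bne).
- split; apply: conj_unit => //;
    [exact: (unitU l1pos w0 ss ww k1) | exact: (unitV l1pos w0 ss ww k1)
    | exact: (unitU l1pos w0 ss ww km) | exact: (unitV l1pos w0 ss ww km)].
- rewrite /tens in EUp EVp EUm EVm *; split.
    by rewrite mulmxBr -EUp -EVp opprB addrA subrK.
  by rewrite mulmxBr -EUm -EVm opprB addrA subrK.
Qed.
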